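(* Let $A,B\in\mathrm{SL}_2\mathbb{R}$ be noncommuting, coherently oriented, both hyperbolic, and assume their translation axes intersect. If $[a]\le[b]$, then $b$ is an optimal word, and so is $a$ provided $[a]=[b]$. There are no other optimal words.
   Context: Setting: $A,B$ have trace $\ge2$; hyperbolic means trace $>2$, with attracting/repelling fixed points $\alpha^\pm$ (for $A$), $\beta^\pm$ (for $B$) in $\partial\mathcal{H}=\mathbb{P}^1\mathbb{R}$; the translation axis is the hyperbolic geodesic joining the two fixed points. Coherent orientation: with $\partial\mathcal{H}$ cyclically ordered and $[\alpha,\beta]$ the closed counterclockwise interval from $\alpha$ to $\beta$, let $I^+=\{\alpha^+\}$ if $\alpha^+=\beta^+$, and otherwise the one of $[\alpha^+,\beta^+],[\beta^+,\alpha^+]$ mapped into itself by both $A$ and $B$ (if it exists); define $I^-$ likewise with $A^{-1},B^{-1},\alpha^-,\beta^-$; the pair is coherently oriented if both exist. Words: $F_2^+$ is the free semigroup of nonempty words over $\{a,b\}$, $|w|$ the length, $\phi$ the homomorphism with $\phi(a)=A,\phi(b)=B$, and $[w]=\mathrm{tr}(\phi(w))$. Define $w\preceq u$ iff $[w^{|u|}]\le[u^{|w|}]$; $w$ is maximal if $u\preceq w$ for all $u\in F_2^+$. A Lyndon word is one strictly smaller in the lexicographic order (with $a<b$) than each of its proper rotations. A complete set of optimal words is a subset $\{v_1,v_2,\dots\}\subseteq F_2^+$ of pairwise distinct maximal Lyndon words such that every maximal word is a power of a rotation of some $v_i$; such a set is unique if it exists, and a word is optimal if it belongs to it. *)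

(* Defs.v *)
From HB Require Import structures.
From mathcomp Require Import all_boot all_order all_algebra.
From mathcomp Require Import reals.
Set Implicit Arguments. Unset Strict Implicit. Unset Printing Implicit Defensive.
Import Order.TTheory GRing.Theory Num.Theory.
Local Open Scope ring_scope.

Section Defs.
Variable R : realType.

(* Some x = the real point x, None = ∞. *)
Definition P1 := option R.

Definition vec_of (p : P1) : 'cV[R]_2 :=
  match p with
  | Some x => \col_(i < 2) [:: x; 1]`_i
  | None => \col_(i < 2) [:: 1; 0]`_i
  end.

Definition point_of (v : 'cV[R]_2) : P1 :=
  if v (@ord_max 1) 0 != 0 then Some (v (@ord0 1) 0 / v (@ord_max 1) 0) else None.

Definition act (M : 'M[R]_2) (p : P1) : P1 := point_of (M *m vec_of p).

Definition attracting (M : 'M[R]_2) (p : P1) : Prop :=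
  exists (v : 'cV[R]_2) (l : R), [/\ v != 0, M *m v = l *: v, 1 < `|l| & p = point_of v].
Definition repelling (M : 'M[R]_2) (p : P1) : Prop :=
  exists (v : 'cV[R]_2) (l : R), [/\ v != 0, M *m v = l *: v, `|l| < 1 & p = point_of v].

Definition hyperbolic (M : 'M[R]_2) : Prop := 2 < \tr M.

(* ---------- cyclic order on P^1 (counterclockwise = increasing on R, then ∞) *)
Definition ple (x y : P1) : bool :=
  match x, y with
  | _, None => true
  | None, Some _ => false
  | Some x, Some y => x <= y
  end.

(* x lies in the closed counterclockwise interval [a, b] *)
Definition ccw_in (a b x : P1) : bool :=
  if ple a b then ple a x && ple x b else ple a x || ple x b.

Definition maps_into_itself (M : 'M[R]_2) (a b : P1) : Prop :=
  forall x, ccw_in a b x -> ccw_in a b (act M x).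

Definition Iexists (M N : 'M[R]_2) (p q : P1) : Prop :=
  p = q \/
  (maps_into_itself M p q /\ maps_into_itself N p q) \/
  (maps_into_itself M q p /\ maps_into_itself N q p).

Definition coherently_oriented (A B : 'M[R]_2) (ap am bp bm : P1) : Prop :=
  Iexists A B ap bp /\ Iexists (invmx A) (invmx B) am bm.

Definition geodesic (p q : P1) (z : R * R) : Prop :=
  0 < z.2 /\
  match p, q with
  | Some p, Some q => (z.1 - (p + q) / 2) ^+ 2 + z.2 ^+ 2 = ((p - q) / 2) ^+ 2
  | Some p, None => z.1 = p
  | None, Some q => z.1 = q
  | None, None => False
  end.

Definition axes_intersect (ap am bp bm : P1) : Prop :=
  exists z, geodesic ap am z /\ geodesic bp bm z.

(* ---------- words over {a, b}: a = false, b = true, with a < b ---------- *)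
Definition word := seq bool.

Definition phi (A B : 'M[R]_2) (w : word) : 'M[R]_2 :=
  foldr (fun c M => (if c then B else A) *m M) 1%:M w.

Definition wtr (A B : 'M[R]_2) (w : word) : R := \tr (phi A B w).

Definition wpow (n : nat) (w : word) : word := flatten (nseq n w).

Definition wle (A B : 'M[R]_2) (w u : word) : Prop :=
  wtr A B (wpow (size u) w) <= wtr A B (wpow (size w) u).

Definition maximal (A B : 'M[R]_2) (w : word) : Prop :=
  w != [::] /\ forall u : word, u != [::] -> wle A B u w.

End Defs.

Fixpoint lexlt (u v : word) : bool :=
  match u, v with
  | [::], [::] => false
  | [::], _ :: _ => true
  | _ :: _, [::] => false
  | x :: u', y :: v' => (~~ x && y) || ((x == y) && lexlt u' v')
  end.

Definition lyndon (w : word) : Prop :=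
  w != [::] /\ forall k, (0 < k < size w)%N -> lexlt w (rot k w).

Section Optimal.
Variable R : realType.

Definition complete_optimal (A B : 'M[R]_2) (V : word -> Prop) : Prop :=
  (forall v, V v -> maximal A B v /\ lyndon v) /\
  (forall w, maximal A B w ->
     exists v, V v /\ exists k n : nat, w = wpow n (rot k v)).

(* w is optimal: it belongs to the (unique, if existing) complete set *)
Definition optimal (A B : 'M[R]_2) (w : word) : Prop :=
  exists V, complete_optimal A B V /\ V w.
End Optimal.

(* Main.v *)
Require Import Defs.
From HB Require Import structures.
From mathcomp Require Import all_boot all_order all_algebra.
From mathcomp Require Import reals ring lra.
Import Order.TTheory GRing.Theory Num.Theory.
Local Open Scope ring_scope.

Section Scalar.
Variable R : realType.

Lemma sym_bnd_sc (a b d l x y : R) :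
  a * d - b ^+ 2 = 1 -> l ^+ 2 - (a + d) * l + 1 = 0 -> 1 < l -> 2 < a + d ->
  (a * x + b * y) ^+ 2 + (b * x + d * y) ^+ 2 <= l ^+ 2 * (x ^+ 2 + y ^+ 2).
Proof.
move=> hg hh hl ht.
have E : (2 * l - (a + d)) * (l ^+ 2 * (x ^+ 2 + y ^+ 2) - ((a * x + b * y) ^+ 2 + (b * x + d * y) ^+ 2))
  = (a + d) * (((l - a) * x - b * y) ^+ 2 + ((l - d) * y - b * x) ^+ 2)
    + ((a + d) + 2 * l - (a + d)) * ((l ^+ 2 - (a + d) * l + 1) + (a * d - b ^+ 2 - 1)) * (x ^+ 2 + y ^+ 2).
  ring.
rewrite hh hg subrr addr0 mulr0 mul0r addr0 in E.
have hpos : 0 < 2 * l - (a + d).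
  have e : l * (2 * l - (a + d)) = l ^+ 2 - 1 + (l ^+ 2 - (a + d) * l + 1) by ring.
  rewrite hh addr0 in e.
  have : 0 < l * (2 * l - (a + d)).
    rewrite e (_ : l ^+ 2 - 1 = (l - 1) * (l + 1)); last by ring.
    by apply: mulr_gt0; lra.
  by rewrite pmulr_rgt0 //; lra.
have : 0 <= (2 * l - (a + d)) * (l ^+ 2 * (x ^+ 2 + y ^+ 2) - ((a * x + b * y) ^+ 2 + (b * x + d * y) ^+ 2)).
  rewrite E; apply: mulr_ge0; first lra.
  by apply: addr_ge0; apply: sqr_ge0.
rewrite pmulr_rge0 // subr_ge0 //.
Qed.

Lemma sym_eq_sc (a b d l x y : R) :
  a * d - b ^+ 2 = 1 -> l ^+ 2 - (a + d) * l + 1 = 0 -> 1 < l -> 2 < a + d ->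
  (a * x + b * y) ^+ 2 + (b * x + d * y) ^+ 2 = l ^+ 2 * (x ^+ 2 + y ^+ 2) ->
  a * x + b * y = l * x /\ b * x + d * y = l * y.
Proof.
move=> hg hh hl ht heq.
have E : (2 * l - (a + d)) * (l ^+ 2 * (x ^+ 2 + y ^+ 2) - ((a * x + b * y) ^+ 2 + (b * x + d * y) ^+ 2))
  = (a + d) * (((l - a) * x - b * y) ^+ 2 + ((l - d) * y - b * x) ^+ 2)
    + ((a + d) + 2 * l - (a + d)) * ((l ^+ 2 - (a + d) * l + 1) + (a * d - b ^+ 2 - 1)) * (x ^+ 2 + y ^+ 2).
  ring.
rewrite hh hg subrr addr0 mulr0 mul0r addr0 heq subrr mulr0 in E.
have : ((l - a) * x - b * y) ^+ 2 + ((l - d) * y - b * x) ^+ 2 = 0.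
  apply/eqP; move/eqP: E; rewrite eq_sym mulf_eq0 => /orP [|//].
  move=> /eqP h; lra.
move/eqP; rewrite paddr_eq0 ?sqr_ge0 // !sqrf_eq0 => /andP [/eqP h1 /eqP h2].
split; [lra|lra].
Qed.

Lemma bnd_tr_sc (a b c d K : R) : a * d - b * c = 1 -> 0 < K ->
  (forall x y, (a * x + b * y) ^+ 2 + (c * x + d * y) ^+ 2 <= K * (x ^+ 2 + y ^+ 2)) ->
  K * (a + d) ^+ 2 <= (K + 1) ^+ 2.
Proof.
move=> hg hK H.
set p := a ^+ 2 + c ^+ 2; set r := b ^+ 2 + d ^+ 2; set q := a * b + c * d.
have HQ : forall x y, 0 <= (K - p) * x ^+ 2 - 2 * q * x * y + (K - r) * y ^+ 2.
  move=> x y; have := H x y; rewrite /p /q /r => h.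
  have -> : (K - (a ^+ 2 + c ^+ 2)) * x ^+ 2 - 2 * (a * b + c * d) * x * y + (K - (b ^+ 2 + d ^+ 2)) * y ^+ 2
    = K * (x ^+ 2 + y ^+ 2) - ((a * x + b * y) ^+ 2 + (c * x + d * y) ^+ 2) by ring.
  by rewrite subr_ge0.
set D := (K - p) * (K - r) - q ^+ 2.
have E : (K + 1) ^+ 2 - K * (a + d) ^+ 2 = D + K * (b - c) ^+ 2 + (1 - (a * d - b * c)) * (1 + (a * d - b * c) + 2 * K).
  rewrite /D /p /q /r; ring.
rewrite hg subrr mul0r addr0 in E.
have hD : 0 <= D.
  have h1 := HQ 1 0; have h2 := HQ 0 1; have h3 := HQ q (K - p); have h4 := HQ (K - r) q.
  have h5 := HQ 1 1; have h6 := HQ 1 (-1).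
  have e3 : (K - p) * q ^+ 2 - 2 * q * q * (K - p) + (K - r) * (K - p) ^+ 2 = (K - p) * D by rewrite /D; ring.
  have e4 : (K - p) * (K - r) ^+ 2 - 2 * q * (K - r) * q + (K - r) * q ^+ 2 = (K - r) * D by rewrite /D; ring.
  rewrite e3 in h3; rewrite e4 in h4.
  rewrite leNgt; apply/negP => hneg.
  have u0 : K - p = 0 by nra.
  have w0 : K - r = 0 by nra.
  have : q = 0 by nra.
  move=> q0; move: hneg; rewrite /D u0 w0 q0; lra.
have : 0 <= (K + 1) ^+ 2 - K * (a + d) ^+ 2.
  rewrite E; apply: addr_ge0 => //; apply: mulr_ge0; [lra | exact: sqr_ge0].
by rewrite subr_ge0.
Qed.

Lemma sbnd_tr_sc (a b c d K : R) : a * d - b * c = 1 -> 0 < K ->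
  (forall x y, 0 < x ^+ 2 + y ^+ 2 -> (a * x + b * y) ^+ 2 + (c * x + d * y) ^+ 2 < K * (x ^+ 2 + y ^+ 2)) ->
  K * (a + d) ^+ 2 < (K + 1) ^+ 2.
Proof.
move=> hg hK H.
set p := a ^+ 2 + c ^+ 2; set r := b ^+ 2 + d ^+ 2; set q := a * b + c * d.
have HQ : forall x y, 0 < x ^+ 2 + y ^+ 2 -> 0 < (K - p) * x ^+ 2 - 2 * q * x * y + (K - r) * y ^+ 2.
  move=> x y hxy; have := H x y hxy; rewrite /p /q /r => h.
  have -> : (K - (a ^+ 2 + c ^+ 2)) * x ^+ 2 - 2 * (a * b + c * d) * x * y + (K - (b ^+ 2 + d ^+ 2)) * y ^+ 2
    = K * (x ^+ 2 + y ^+ 2) - ((a * x + b * y) ^+ 2 + (c * x + d * y) ^+ 2) by ring.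
  by rewrite subr_gt0.
set D := (K - p) * (K - r) - q ^+ 2.
have E : (K + 1) ^+ 2 - K * (a + d) ^+ 2 = D + K * (b - c) ^+ 2 + (1 - (a * d - b * c)) * (1 + (a * d - b * c) + 2 * K).
  rewrite /D /p /q /r; ring.
rewrite hg subrr mul0r addr0 in E.
have h1 : 0 < K - p.
  have := HQ 1 0; rewrite expr1n (expr0n _ 2) addr0 => /(_ ltr01).
  by rewrite /= !mulr0 mulr1 subr0 addr0.
have hD : 0 < D.
  have h3 := HQ q (K - p).
  have e3 : (K - p) * q ^+ 2 - 2 * q * q * (K - p) + (K - r) * (K - p) ^+ 2 = (K - p) * D by rewrite /D; ring.
  rewrite e3 in h3.
  have : 0 < q ^+ 2 + (K - p) ^+ 2 by nra.
  by move=> /h3; rewrite pmulr_rgt0.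
have : 0 < (K + 1) ^+ 2 - K * (a + d) ^+ 2.
  rewrite E; apply: ltr_wpDr => //; apply: mulr_ge0; [lra | exact: sqr_ge0].
by rewrite subr_gt0.
Qed.

End Scalar.

Section Mat.
Variable R : realType.
Implicit Types M N A B : 'M[R]_2.

Lemma sum2E (F : 'I_2 -> R) : \sum_(i < 2) F i = F 0 + F 1.
Proof. rewrite !big_ord_recl big_ord0 addr0. by congr (F _ + F _); apply: val_inj. Qed.
Lemma mul2E M N i j : (M *m N) i j = M i 0 * N 0 j + M i 1 * N 1 j.
Proof. by rewrite mxE sum2E. Qed.
Lemma det2E M : \det M = M 0 0 * M 1 1 - M 0 1 * M 1 0.
Proof. rewrite (expand_det_row _ 0) sum2E /cofactor !det_mx11 /= !mxE /=.
have -> : lift (0 : 'I_2) 0 = 1 by apply: val_inj.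
have -> : lift (1 : 'I_2) 0 = 0 by apply: val_inj.
by rewrite /= expr0 expr1 mul1r mulN1r mulrN.
Qed.
Lemma tr2E M : \tr M = M 0 0 + M 1 1.
Proof. by rewrite /mxtrace sum2E. Qed.
Lemma ord2P (i : 'I_2) : i = 0 \/ i = 1.
Proof. case: i => [[|[|i]] Hi]; [left|right|by []]; exact: val_inj. Qed.
Lemma mx2P M N : M 0 0 = N 0 0 -> M 0 1 = N 0 1 -> M 1 0 = N 1 0 -> M 1 1 = N 1 1 -> M = N.
Proof.
move=> h1 h2 h3 h4; apply/matrixP=> i j.
by case: (ord2P i) => ->; case: (ord2P j) => ->.
Qed.
Lemma id2E : let I := (1%:M : 'M[R]_2) in I 0 0 = 1 /\ I 0 1 = 0 /\ I 1 0 = 0 /\ I 1 1 = 1.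
Proof. by rewrite /= !mxE /=. Qed.

Definition ap1 M x y := M 0 0 * x + M 0 1 * y.
Definition ap2 M x y := M 1 0 * x + M 1 1 * y.
Definition nrm M x y := ap1 M x y ^+ 2 + ap2 M x y ^+ 2.
Definition bnd M K := forall x y, nrm M x y <= K * (x ^+ 2 + y ^+ 2).
Definition sbnd M K := forall x y, 0 < x ^+ 2 + y ^+ 2 -> nrm M x y < K * (x ^+ 2 + y ^+ 2).

Lemma ap1_mul M N x y : ap1 (M *m N) x y = ap1 M (ap1 N x y) (ap2 N x y).
Proof. rewrite /ap1 /ap2 !mul2E; ring. Qed.
Lemma ap2_mul M N x y : ap2 (M *m N) x y = ap2 M (ap1 N x y) (ap2 N x y).
Proof. rewrite /ap1 /ap2 !mul2E; ring. Qed.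
Lemma nrm_mul M N x y : nrm (M *m N) x y = nrm M (ap1 N x y) (ap2 N x y).
Proof. by rewrite /nrm ap1_mul ap2_mul. Qed.

Lemma nrm_pos N x y : \det N = 1 -> 0 < x ^+ 2 + y ^+ 2 -> 0 < ap1 N x y ^+ 2 + ap2 N x y ^+ 2.
Proof.
rewrite det2E /ap1 /ap2 => hd hxy.
rewrite lt_neqAle addr_ge0 ?sqr_ge0 // andbT eq_sym paddr_eq0 ?sqr_ge0 // !sqrf_eq0.
apply/negP => /andP [/eqP e1 /eqP e2].
have ex : x = N 1 1 * (N 0 0 * x + N 0 1 * y) - N 0 1 * (N 1 0 * x + N 1 1 * y).
  rewrite (_ : _ - _ = (N 0 0 * N 1 1 - N 0 1 * N 1 0) * x); last by ring.
  by rewrite hd mul1r.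
have ey : y = N 0 0 * (N 1 0 * x + N 1 1 * y) - N 1 0 * (N 0 0 * x + N 0 1 * y).
  rewrite (_ : _ - _ = (N 0 0 * N 1 1 - N 0 1 * N 1 0) * y); last by ring.
  by rewrite hd mul1r.
rewrite e1 e2 !mulr0 subr0 in ex ey.
by move: hxy; rewrite ex ey expr0n /= addr0 ltxx.
Qed.

Lemma bnd_mul M N K1 K2 : 0 <= K1 -> bnd M K1 -> bnd N K2 -> bnd (M *m N) (K1 * K2).
Proof.
move=> hK hM hN x y; rewrite nrm_mul.
apply: le_trans (hM _ _) _; rewrite -mulrA; apply: ler_wpM2l => //; exact: hN.
Qed.
Lemma sbnd_mul_l M N K1 K2 : 0 < K1 -> \det N = 1 -> sbnd M K1 -> bnd N K2 -> sbnd (M *m N) (K1 * K2).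
Proof.
move=> hK hd hM hN x y hxy; rewrite nrm_mul.
apply: lt_le_trans (hM _ _ (nrm_pos _ _ _ hd hxy)) _; rewrite -mulrA; apply: ler_wpM2l; first exact: ltW.
exact: hN.
Qed.
Lemma sbnd_mul_r M N K1 K2 : 0 < K1 -> bnd M K1 -> sbnd N K2 -> sbnd (M *m N) (K1 * K2).
Proof.
move=> hK hM hN x y hxy; rewrite nrm_mul.
apply: le_lt_trans (hM _ _) _; rewrite -mulrA ltr_pM2l //; exact: hN.
Qed.
Lemma bnd1 : bnd 1%:M 1.
Proof.
move=> x y; case: id2E => h1 [h2 [h3 h4]].
by rewrite /nrm /ap1 /ap2 h1 h2 h3 h4 !mul1r !mul0r addr0 add0r.
Qed.
Lemma bnd_weak M K K' : K <= K' -> bnd M K -> bnd M K'.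
Proof.
move=> hK hM x y; apply: le_trans (hM x y) _; apply: ler_wpM2r => //.
by apply: addr_ge0; apply: sqr_ge0.
Qed.
Lemma sbnd_of_bnd M K K' : K < K' -> bnd M K -> sbnd M K'.
Proof.
move=> hK hM x y hxy; apply: le_lt_trans (hM x y) _; by rewrite ltr_pM2r.
Qed.

Definition lam (t : R) := (t + Num.sqrt (t ^+ 2 - 4)) / 2.

Lemma lam_facts t : 2 < t -> 1 < lam t /\ lam t ^+ 2 - t * lam t + 1 = 0.
Proof.
move=> ht; rewrite /lam.
have hs : 0 <= t ^+ 2 - 4 by nra.
have s2 := sqr_sqrtr hs.
have s0 := sqrtr_ge0 (t ^+ 2 - 4).
split; first lra.
set s := Num.sqrt _ in s2 s0 *.
have -> : ((t + s) / 2) ^+ 2 - t * ((t + s) / 2) + 1 = (s ^+ 2 - (t ^+ 2 - 4)) / 4 by field.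
by rewrite s2 subrr mul0r.
Qed.

Lemma lam_le t t' : 2 < t -> t <= t' -> lam t <= lam t'.
Proof.
move=> ht htt; rewrite /lam ler_pM2r ?invr_gt0 ?ltr0n //; apply: lerD => //; rewrite ler_sqrt; nra.
Qed.
Lemma lam_lt t t' : 2 < t -> t < t' -> lam t < lam t'.
Proof.
move=> ht htt; rewrite /lam ltr_pM2r ?invr_gt0 ?ltr0n //; apply: ltr_leD => //; rewrite ler_sqrt; nra.
Qed.

Lemma sym_bnd M : M 0 1 = M 1 0 -> \det M = 1 -> 2 < \tr M -> bnd M (lam (\tr M) ^+ 2).
Proof.
move=> hs hd ht x y; have [hl hh] := lam_facts _ ht.
rewrite tr2E in ht hh hl *; rewrite det2E -hs in hd.
by rewrite /nrm /ap1 /ap2 -hs; apply: sym_bnd_sc; rewrite ?expr2.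
Qed.

Lemma sym_eq M x y : M 0 1 = M 1 0 -> \det M = 1 -> 2 < \tr M ->
  nrm M x y = lam (\tr M) ^+ 2 * (x ^+ 2 + y ^+ 2) ->
  ap1 M x y = lam (\tr M) * x /\ ap2 M x y = lam (\tr M) * y.
Proof.
move=> hs hd ht; have [hl hh] := lam_facts _ ht.
rewrite tr2E in ht hh hl *; rewrite det2E -hs in hd.
by rewrite /nrm /ap1 /ap2 -hs; apply: sym_eq_sc; rewrite ?expr2.
Qed.

Lemma bnd_tr M K : \det M = 1 -> 0 < K -> bnd M K -> K * \tr M ^+ 2 <= (K + 1) ^+ 2.
Proof. rewrite det2E tr2E => hd hK hM; apply: bnd_tr_sc hd hK _; exact: hM. Qed.
Lemma sbnd_tr M K : \det M = 1 -> 0 < K -> sbnd M K -> K * \tr M ^+ 2 < (K + 1) ^+ 2.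
Proof. rewrite det2E tr2E => hd hK hM; apply: sbnd_tr_sc hd hK _; exact: hM. Qed.

Lemma pair_sbnd M N : M 0 1 = M 1 0 -> N 0 1 = N 1 0 -> \det M = 1 -> \det N = 1 ->
  2 < \tr M -> \tr M = \tr N -> M != N ->
  sbnd (M *m N) (lam (\tr M) ^+ 2 * lam (\tr M) ^+ 2).
Proof.
move=> sM sN dM dN ht etr neq x y hxy.
have [hl hh] := lam_facts _ ht.
set l := lam (\tr M) in hl hh *.
rewrite ltNge; apply/negP => hge.
rewrite nrm_mul in hge.
set x' := ap1 N x y in hge; set y' := ap2 N x y in hge.
have htN : 2 < \tr N by rewrite -etr.
have hN := sym_bnd _ sN dN htN x y.
have hM := sym_bnd _ sM dM ht x' y'.
rewrite -etr -/l in hN.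
rewrite -/l in hM.
have hK : 0 < l ^+ 2 by apply: exprn_gt0; lra.
have hxy' : nrm N x y = x' ^+ 2 + y' ^+ 2 by [].
have eN : nrm N x y = l ^+ 2 * (x ^+ 2 + y ^+ 2).
  apply/eqP; rewrite eq_le hN /=.
  rewrite -(ler_pM2l hK) mulrA hxy'; exact: le_trans hge hM.
have eM : nrm M x' y' = l ^+ 2 * (x' ^+ 2 + y' ^+ 2).
  apply/eqP; rewrite eq_le hM /= -hxy' eN mulrA; exact: hge.
have := sym_eq _ x y sN dN htN; rewrite -etr -/l => /(_ eN) [e1 e2].
have [e3 e4] := sym_eq _ _ _ sM dM ht eM.
rewrite -/l -/x' -/y' in e3 e4 e1 e2.
have hl0 : l != 0 by apply/eqP => h; rewrite h in hl; lra.
have f1 : ap1 M x y = l * x.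
  apply: (mulfI hl0); rewrite -[l * ap1 M x y]/(l * (M 0 0 * x + M 0 1 * y)).
  have -> : l * (M 0 0 * x + M 0 1 * y) = ap1 M x' y' by rewrite /ap1 -/x' e1 e2; ring.
  by rewrite e3 e1.
have f2 : ap2 M x y = l * y.
  apply: (mulfI hl0); rewrite -[l * ap2 M x y]/(l * (M 1 0 * x + M 1 1 * y)).
  have -> : l * (M 1 0 * x + M 1 1 * y) = ap2 M x' y' by rewrite /ap2 -/y' e1 e2; ring.
  by rewrite e4 e2.
move: e1 e2 f1 f2; rewrite /x' /y' /ap1 /ap2 => e1 e2 f1 f2.
move: etr; rewrite !tr2E => etr.
set e := M 0 0 - N 0 0; set f := M 0 1 - N 0 1.
have g1 : e * x + f * y = 0.
  have -> : e * x + f * y = (M 0 0 * x + M 0 1 * y) - (N 0 0 * x + N 0 1 * y) by rewrite /e /f; ring.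
  by rewrite f1 e1 subrr.
have g2 : f * x - e * y = 0.
  have hM11 : M 1 1 = N 0 0 + N 1 1 - M 0 0 by lra.
  have -> : f * x - e * y = (M 1 0 * x + M 1 1 * y) - (N 1 0 * x + N 1 1 * y).
    by rewrite /e /f -sM -sN hM11; ring.
  by rewrite f2 e2 subrr.
have g3 : (e ^+ 2 + f ^+ 2) * (x ^+ 2 + y ^+ 2) = 0.
  have -> : (e ^+ 2 + f ^+ 2) * (x ^+ 2 + y ^+ 2) = (e * x + f * y) ^+ 2 + (f * x - e * y) ^+ 2 by ring.
  by rewrite g1 g2 expr0n /= addr0.
move/eqP: g3; rewrite mulf_eq0 (gt_eqF hxy) orbF paddr_eq0 ?sqr_ge0 // !sqrf_eq0.
move=> /andP [/eqP he /eqP hf].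
move/negP: neq; apply; apply/eqP; apply: mx2P.
- move: he; rewrite /e; lra.
- move: hf; rewrite /f; lra.
- rewrite -sM -sN; move: hf; rewrite /f; lra.
- move: he; rewrite /e; lra.
Qed.


Lemma phi_cat A B u v : phi A B (u ++ v) = phi A B u *m phi A B v.
Proof. elim: u => [|c u IH] /=; first by rewrite mul1mx. by rewrite IH mulmxA. Qed.

Lemma phi_cons A B c u : phi A B (c :: u) = (if c then B else A) *m phi A B u.
Proof. by []. Qed.

Lemma det_phi A B u : \det A = 1 -> \det B = 1 -> \det (phi A B u) = 1.
Proof.
move=> dA dB; elim: u => [|c u IH]; first by rewrite /= det1.
by rewrite phi_cons det_mulmx IH mulr1; case: c.
Qed.

Lemma bnd_phi A B K u : 0 <= K -> bnd A K -> bnd B K -> bnd (phi A B u) (K ^+ size u).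
Proof.
move=> hK bA bB; elim: u => [|c u IH]; first by rewrite expr0; exact: bnd1.
rewrite phi_cons /= exprS; apply: bnd_mul => //; by case: c.
Qed.

Lemma sbnd_phi A B K u1 s u2 : 0 < K -> \det A = 1 -> \det B = 1 -> bnd A K -> bnd B K ->
  sbnd (phi A B s) (K ^+ size s) ->
  sbnd (phi A B (u1 ++ s ++ u2)) (K ^+ size (u1 ++ s ++ u2)).
Proof.
move=> hK dA dB bA bB hs.
rewrite !phi_cat !size_cat !exprD.
apply: sbnd_mul_r; first exact: exprn_gt0.
  by apply: bnd_phi => //; exact: ltW.
apply: sbnd_mul_l => //; first exact: exprn_gt0.
  exact: det_phi.
by apply: bnd_phi => //; exact: ltW.
Qed.

Lemma tr_rec A B c n : \det (if c then B else A) = 1 ->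
  wtr A B (nseq n.+2 c) = \tr (if c then B else A) * wtr A B (nseq n.+1 c) - wtr A B (nseq n c).
Proof.
rewrite /wtr /= => hd.
set X := (if c then B else A); set Y := phi A B (nseq n c).
have E : \tr (X *m (X *m Y)) = \tr X * \tr (X *m Y) - \tr Y + (1 - \det X) * \tr Y.
  rewrite !tr2E !mul2E det2E; ring.
by rewrite E hd subrr mul0r addr0.
Qed.

Lemma tr_pow A B c (mu nu : R) : \det (if c then B else A) = 1 ->
  mu + nu = \tr (if c then B else A) -> mu * nu = 1 ->
  forall n, wtr A B (nseq n c) = mu ^+ n + nu ^+ n.
Proof.
move=> hd hs hp.
have H : forall n, wtr A B (nseq n c) = mu ^+ n + nu ^+ n /\ wtr A B (nseq n.+1 c) = mu ^+ n.+1 + nu ^+ n.+1.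
  elim=> [|n [IH1 IH2]].
    split; first by rewrite /wtr /= tr2E; case: id2E => h1 [_ [_ h4]]; rewrite h1 h4 !expr0.
    by rewrite /wtr /= mulmx1 !expr1 hs.
  split => //; rewrite tr_rec // IH1 IH2 -hs !exprS.
  have -> : mu * (mu * mu ^+ n) + nu * (nu * nu ^+ n) =
    (mu + nu) * (mu * mu ^+ n + nu * nu ^+ n) - (mu * nu) * (mu ^+ n + nu ^+ n) by ring.
  by rewrite hp mul1r.
by move=> n; case: (H n).
Qed.

Lemma nseq_of_notin (c : bool) (u : word) : ~~ c \notin u -> u = nseq (size u) c.
Proof.
elim: u => [|a u IH] //=; rewrite in_cons negb_or => /andP [ha hu].
by rewrite -IH //; congr (_ :: _); move: ha; clear IH hu; case: a; case: c.
Qed.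

Lemma split_in (c : bool) (u : word) : c \in u -> exists u1 u2, u = u1 ++ [:: c] ++ u2.
Proof.
elim: u => [|a u IH] //; rewrite in_cons => /orP [/eqP ->|/IH [u1 [u2 ->]]].
  by exists [::], u.
by exists (a :: u1), u2.
Qed.

Lemma split_adj (c : bool) (u : word) : c \in u -> ~~ c \in u ->
  exists u1 u2 x, u = u1 ++ [:: x; ~~ x] ++ u2.
Proof.
elim: u c => [|a u IH] c //.
case: u IH => [|b u] IH.
  by rewrite !mem_seq1 => /eqP -> /eqP; case: a.
case: (boolP (b == ~~ a)) => hb.
  by move=> _ _; exists [::], u, a; rewrite (eqP hb).
have hba : b = a by move: hb; clear IH; case: a; case: b.
move=> h1 h2.
have hm : forall z : bool, (z \in a :: b :: u) = (z \in b :: u).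
  move=> z; rewrite hba in_cons; case: eqP => //= ->; by rewrite in_cons eqxx.
rewrite !hm in h1 h2.
have [u1 [u2 [y ->]]] := IH c h1 h2.
by exists (a :: u1), u2, y.
Qed.

Lemma sq_le (a z : R) : 0 < z -> a ^+ 2 <= z ^+ 2 -> a <= z.
Proof. move=> hz h; rewrite leNgt; apply/negP => hlt; nra. Qed.
Lemma sq_lt (a z : R) : 0 < z -> a ^+ 2 < z ^+ 2 -> a < z.
Proof. move=> hz h; rewrite ltNge; apply/negP => hlt; nra. Qed.

Theorem core A B : A 0 1 = A 1 0 -> B 0 1 = B 1 0 -> \det A = 1 -> \det B = 1 ->
  2 < \tr A -> \tr A <= \tr B -> A *m B != B *m A ->
  forall u : word, u != [::] ->
  wtr A B u <= wtr A B (nseq (size u) true) /\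
  (wtr A B u = wtr A B (nseq (size u) true) ->
     u = nseq (size u) true \/ (\tr A = \tr B /\ u = nseq (size u) false)).
Proof.
move=> sA sB dA dB htA hAB ncom u hu.
have htB : 2 < \tr B by lra.
have [hl hh] := lam_facts _ htB.
set mu := lam (\tr B) in hl hh.
set nu := \tr B - mu.
have hmn : mu * nu = 1 by rewrite /nu; lra.
have [hlA hhA] := lam_facts _ htA.
have hlAB : lam (\tr A) <= mu := lam_le _ _ htA hAB.
set K := mu ^+ 2.
have hK : 0 < K by apply: exprn_gt0; lra.
have bA : bnd A K.
  apply: bnd_weak (sym_bnd _ sA dA htA); rewrite /K; nra.
have bB : bnd B K := sym_bnd _ sB dB htB.
set n := size u.
have hT : wtr A B (nseq n true) = mu ^+ n + nu ^+ n.
  by apply: tr_pow => //; rewrite /nu; lra.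
set m := mu ^+ n.
have hm : 0 < m by apply: exprn_gt0; lra.
have hKn : K ^+ n = m ^+ 2 by rewrite /K /m -!exprM mulnC.
have hmT : m * wtr A B (nseq n true) = m ^+ 2 + 1.
  by rewrite hT mulrDr -expr2 /m -exprMn hmn expr1n.
have key : forall w, m ^+ 2 * w ^+ 2 <= (m ^+ 2 + 1) ^+ 2 -> w <= wtr A B (nseq n true).
  move=> w hw; rewrite -(ler_pM2l hm) hmT; apply: sq_le; first by apply: addr_gt0 => //; exact: exprn_gt0.
  by rewrite exprMn.
have keys : forall w, m ^+ 2 * w ^+ 2 < (m ^+ 2 + 1) ^+ 2 -> w < wtr A B (nseq n true).
  move=> w hw; rewrite -(ltr_pM2l hm) hmT; apply: sq_lt; first by apply: addr_gt0 => //; exact: exprn_gt0.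
  by rewrite exprMn.
have dW := det_phi A B u dA dB.
split.
  apply: key; rewrite -hKn; apply: bnd_tr => //; first exact: exprn_gt0.
  by apply: bnd_phi => //; exact: ltW.
move=> heq.
case: (boolP (false \in u)) => hf; last by left; exact: (nseq_of_notin true u hf).
have strict : sbnd (phi A B u) (K ^+ n) -> False.
  move=> hs.
  have hlt : wtr A B u < wtr A B (nseq n true).
    apply: keys; rewrite -hKn; apply: sbnd_tr => //; exact: exprn_gt0.
  by rewrite heq ltxx in hlt.
case: (ltrP (\tr A) (\tr B)) => hlt.
  exfalso; apply: strict.
  have [u1 [u2 eu]] := split_in _ _ hf.
  rewrite /n eu; apply: sbnd_phi => //.
  rewrite /= mulmx1 expr1; apply: sbnd_of_bnd (sym_bnd _ sA dA htA).
  have := lam_lt _ _ htA hlt; rewrite -/mu /K => h; nra.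
have etr : \tr A = \tr B by apply/eqP; rewrite eq_le hAB hlt.
case: (boolP (true \in u)) => ht; last by right; split => //; exact: (nseq_of_notin false u ht).
exfalso; apply: strict.
have [u1 [u2 [x eu]]] := split_adj _ _ ht hf.
have nAB : A != B by apply: contraNneq ncom => ->.
rewrite /n eu; apply: sbnd_phi => //.
rewrite /= mulmx1 /K.
have e2 : (mu ^+ 2) ^+ 2 = lam (\tr A) ^+ 2 * lam (\tr A) ^+ 2 by rewrite /mu -etr expr2.
rewrite e2; clear eu; case: x => /=.
- rewrite etr; apply: (pair_sbnd _ _ sB sA dB dA htB (esym etr)); by rewrite eq_sym.
- exact: (pair_sbnd _ _ sA sB dA dB htA etr nAB).
Qed.

Definition mk2 (a b c d : R) : 'M[R]_2 :=
  \matrix_(i < 2, j < 2) (if i == 0 then (if j == 0 then a else b) else (if j == 0 then c else d)).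
Lemma mk2E a b c d : let X := mk2 a b c d in X 0 0 = a /\ X 0 1 = b /\ X 1 0 = c /\ X 1 1 = d.
Proof. by rewrite /= !mxE /=. Qed.

Definition fixp M (p : P1 R) : Prop :=
  match p with
  | Some t => M 1 0 * t ^+ 2 + (M 1 1 - M 0 0) * t - M 0 1 = 0
  | None => M 1 0 = 0
  end.

Lemma mulv2E M (v : 'M[R]_(2,1)) i j : (M *m v) i j = M i 0 * v 0 j + M i 1 * v 1 j.
Proof. by rewrite mxE sum2E. Qed.

Lemma fixp_eig M (v : 'cV[R]_2) (l : R) : v != 0 -> M *m v = l *: v -> fixp M (point_of v).
Proof.
move=> hv hM.
have e0 : M 0 0 * v 0 0 + M 0 1 * v 1 0 = l * v 0 0.
  by have := congr1 (fun X : 'cV[R]_2 => X 0 0) hM; rewrite /= mulv2E mxE.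
have e1 : M 1 0 * v 0 0 + M 1 1 * v 1 0 = l * v 1 0.
  by have := congr1 (fun X : 'cV[R]_2 => X 1 0) hM; rewrite /= mulv2E mxE.
have om : (@ord_max 1) = 1 by apply: val_inj.
rewrite /point_of om.
case: (boolP (v 1 0 != 0)) => h1 /=.
  set x0 := v 0 0; set x1 := v 1 0.
  have -> : M 1 0 * (x0 / x1) ^+ 2 + (M 1 1 - M 0 0) * (x0 / x1) - M 0 1
    = (x0 * (M 1 0 * x0 + M 1 1 * x1) - x1 * (M 0 0 * x0 + M 0 1 * x1)) / x1 ^+ 2.
    by field.
  rewrite e0 e1.
  have -> : x0 * (l * x1) - x1 * (l * x0) = 0 by ring.
  by rewrite mul0r.
move: h1; rewrite negbK => /eqP h1.
have h0 : v 0 0 != 0.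
  apply: contraNneq hv => h0; apply/eqP/matrixP => i j.
  rewrite (_ : j = 0); last by apply: val_inj; case: j => [[|j] Hj].
  by rewrite mxE; case: (ord2P i) => ->.
move: e1; rewrite h1 !mulr0 addr0 => /eqP; rewrite mulf_eq0 (negbTE h0) orbF.
by move/eqP.
Qed.

Lemma geo_sym M p q (z : R * R) : fixp M p -> fixp M q -> geodesic p q z ->
  M 1 0 * (z.1 ^+ 2 + z.2 ^+ 2) + (M 1 1 - M 0 0) * z.1 - M 0 1 = 0.
Proof.
case: z => x y /=; rewrite /geodesic /=.
case: p => [p|]; case: q => [q|] //= hp hq [hy hg].
- have G : (x - p) * (x - q) + y ^+ 2 = 0.
    have -> : (x - p) * (x - q) + y ^+ 2 = (x - (p + q) / 2) ^+ 2 + y ^+ 2 - ((p - q) / 2) ^+ 2 by field.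
    by rewrite hg subrr.
  have hpq : p - q != 0.
    apply/eqP => e; have ep : q = p by lra.
    rewrite ep in G.
    have h1 : 0 <= (x - p) * (x - p) by rewrite -expr2 sqr_ge0.
    have h2 : 0 < y ^+ 2 by apply: exprn_gt0.
    lra.
  have E1 : (M 1 0) * (p + q) - ((M 0 0) - (M 1 1)) = 0.
    apply/eqP; rewrite -(mulIr_eq0 _ (mulIf hpq)) /=.
    have -> : ((M 1 0) * (p + q) - ((M 0 0) - (M 1 1))) * (p - q) = ((M 1 0) * p ^+ 2 + ((M 1 1) - (M 0 0)) * p - (M 0 1)) - ((M 1 0) * q ^+ 2 + ((M 1 1) - (M 0 0)) * q - (M 0 1)) by ring.
    by rewrite hp hq subrr.
  have -> : (M 1 0) * (x ^+ 2 + y ^+ 2) + ((M 1 1) - (M 0 0)) * x - (M 0 1)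
    = (M 1 0) * ((x - p) * (x - q) + y ^+ 2) + ((M 1 0) * (p + q) - ((M 0 0) - (M 1 1))) * (x - p) + ((M 1 0) * p ^+ 2 + ((M 1 1) - (M 0 0)) * p - (M 0 1)) by ring.
  by rewrite G E1 hp mulr0 mul0r !addr0.
- by move: hp; rewrite hq hg !mul0r !add0r.
- by move: hq; rewrite hp hg !mul0r !add0r.
- by case: hg.
Qed.

Lemma conj_sym M (x y : R) : 0 < y ->
  M 1 0 * (x ^+ 2 + y ^+ 2) + (M 1 1 - M 0 0) * x - M 0 1 = 0 ->
  (mk2 (1 / y) (- x / y) 0 1 *m M *m mk2 y x 0 1) 0 1 = (mk2 (1 / y) (- x / y) 0 1 *m M *m mk2 y x 0 1) 1 0.
Proof.
move=> hy hL.
have [q1 [q2 [q3 q4]]] := mk2E (1 / y) (- x / y) 0 1.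
have [p1 [p2 [p3 p4]]] := mk2E y x 0 1.
rewrite !mul2E q1 q2 q3 q4 p1 p2 p3 p4.
have hy0 : y != 0 by rewrite gt_eqF.
apply/eqP; rewrite -subr_eq0; apply/eqP.
have -> : (1 / y * M 0 0 + - x / y * M 1 0) * x + (1 / y * M 0 1 + - x / y * M 1 1) * 1 -
  ((0 * M 0 0 + 1 * M 1 0) * y + (0 * M 0 1 + 1 * M 1 1) * 0)
  = - (M 1 0 * (x ^+ 2 + y ^+ 2) + (M 1 1 - M 0 0) * x - M 0 1) / y by field.
by rewrite hL oppr0 mul0r.
Qed.

Lemma QP1 (x y : R) : 0 < y -> mk2 (1 / y) (- x / y) 0 1 *m mk2 y x 0 1 = 1%:M.
Proof.
move=> hy; have hy0 : y != 0 by rewrite gt_eqF.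
have [q1 [q2 [q3 q4]]] := mk2E (1 / y) (- x / y) 0 1.
have [p1 [p2 [p3 p4]]] := mk2E y x 0 1.
case: id2E => i1 [i2 [i3 i4]].
apply: mx2P; rewrite !mul2E ?q1 ?q2 ?q3 ?q4 ?p1 ?p2 ?p3 ?p4 ?i1 ?i2 ?i3 ?i4; field.
all: by [].

Qed.
Lemma PQ1 (x y : R) : 0 < y -> mk2 y x 0 1 *m mk2 (1 / y) (- x / y) 0 1 = 1%:M.
Proof.
move=> hy; have hy0 : y != 0 by rewrite gt_eqF.
have [q1 [q2 [q3 q4]]] := mk2E (1 / y) (- x / y) 0 1.
have [p1 [p2 [p3 p4]]] := mk2E y x 0 1.
case: id2E => i1 [i2 [i3 i4]].
apply: mx2P; rewrite !mul2E ?q1 ?q2 ?q3 ?q4 ?p1 ?p2 ?p3 ?p4 ?i1 ?i2 ?i3 ?i4; field.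
all: by [].

Qed.

Lemma conj_phi (P Q A B : 'M[R]_2) u : Q *m P = 1%:M -> P *m Q = 1%:M ->
  phi (Q *m A *m P) (Q *m B *m P) u = Q *m phi A B u *m P.
Proof.
move=> hQP hPQ; elim: u => [|c u IH]; first by rewrite /= mulmx1.
rewrite !phi_cons IH.
have E : forall X, (Q *m X *m P) *m (Q *m phi A B u *m P) = Q *m (X *m phi A B u) *m P.
  move=> X; rewrite -!mulmxA (mulmxA P Q) hPQ mul1mx.
  by rewrite !mulmxA.
by case: c; rewrite E.
Qed.

Lemma conj_tr (P Q X : 'M[R]_2) : P *m Q = 1%:M -> \tr (Q *m X *m P) = \tr X.
Proof. by move=> hPQ; rewrite mxtrace_mulC mulmxA hPQ mul1mx. Qed.

Lemma conj_det (P Q X : 'M[R]_2) : Q *m P = 1%:M -> \det (Q *m X *m P) = \det X.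
Proof.
move=> hQP; rewrite !det_mulmx.
have -> : \det Q * \det X * \det P = \det X * (\det Q * \det P) by ring.
by rewrite -det_mulmx hQP det1 mulr1.
Qed.

Lemma conj_inj (P Q X Y : 'M[R]_2) : P *m Q = 1%:M -> Q *m X *m P = Q *m Y *m P -> X = Y.
Proof.
move=> hPQ E.
have e : forall Z, Z = P *m (Q *m Z *m P) *m Q.
  by move=> Z; rewrite !mulmxA hPQ mul1mx -mulmxA hPQ mulmx1.
by rewrite (e X) (e Y) E.
Qed.

Lemma wpow_seq1 n (c : bool) : wpow n [:: c] = nseq n c.
Proof. by elim: n => [|n IH] //=; rewrite /wpow /= -/(wpow n [:: c]) IH. Qed.
Lemma wpow1 (u : word) : wpow 1 u = u.
Proof. by rewrite /wpow /= cats0. Qed.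
Lemma size_wpow n (u : word) : size (wpow n u) = (n * size u)%N.
Proof. by elim: n => [|n IH] //=; rewrite /wpow /= size_cat -/(wpow n u) IH mulSn. Qed.
Lemma wpow_nseq n k (c : bool) : wpow n (nseq k c) = nseq (n * k) c.
Proof. by elim: n => [|n IH] //=; rewrite /wpow /= -/(wpow n _) IH mulSn nseqD. Qed.
Lemma lexlt_irr (w : word) : lexlt w w = false.
Proof. by elim: w => [|x w IH] //=; rewrite IH eqxx andbF orbF; case: x. Qed.
Lemma rcons_nseq n (c : bool) : rcons (nseq n c) c = nseq n.+1 c.
Proof. by elim: n => [|n IH] //=; rewrite IH. Qed.
Lemma lyndon_nseq n (c : bool) : lyndon (nseq n c) -> n = 1%N.
Proof.
case: n => [[]//|[|n]] // [_ H].
have hr : rot 1 (nseq n.+2 c) = nseq n.+2 c.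
  by rewrite (_ : nseq n.+2 c = c :: nseq n.+1 c) // rot1_cons rcons_nseq.
have := H 1%N; rewrite size_nseq hr lexlt_irr.
by move=> /(_ isT).
Qed.

Lemma final_logic A B
  (F1 : forall u : word, u != [::] -> wtr A B u <= wtr A B (nseq (size u) true))
  (F2 : forall u : word, u != [::] -> wtr A B u = wtr A B (nseq (size u) true) ->
     u = nseq (size u) true \/ (wtr A B [:: false] = wtr A B [:: true] /\ u = nseq (size u) false))
  (F3 : wtr A B [:: false] = wtr A B [:: true] -> forall n, wtr A B (nseq n false) = wtr A B (nseq n true)) :
  forall w : word, optimal A B w <->
    (w = [:: true] \/ (wtr A B [:: false] = wtr A B [:: true] /\ w = [:: false])).
Proof.
set E := wtr A B [:: false] = wtr A B [:: true].
have maxP : forall w : word, maximal A B w <->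
    (w != [::] /\ (w = nseq (size w) true \/ (E /\ w = nseq (size w) false))).
  move=> w; split.
    case=> hw H; split => //.
    have := H [:: true] isT; rewrite /wle wpow_seq1 wpow1 => h.
    apply: F2 => //; apply/eqP; rewrite eq_le h andbT; exact: F1.
  case=> hw H; split => // u hu; rewrite /wle.
  have hne : wpow (size w) u != [::].
    by rewrite -size_eq0 size_wpow muln_eq0 !size_eq0 negb_or hw hu.
  apply: le_trans (F1 _ hne) _; rewrite size_wpow.
  case: H => [->|[hE ->]]; rewrite wpow_nseq size_nseq mulnC //.
  by rewrite F3.
have lyn1 : forall c : bool, lyndon [:: c].
  by move=> c; split => // k /andP [h1 h2]; move: h1 h2; case: k.
set V0 := fun w : word => w = [:: true] \/ (E /\ w = [:: false]).
have cV0 : complete_optimal A B V0.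
  split.
    move=> v [->|[hE ->]]; split => //; apply/maxP; split => //; by [left|right].
  move=> w /maxP [hw [ew|[hE ew]]].
    by exists [:: true]; split; [left|exists 0%N, (size w); rewrite rot0 wpow_seq1].
  by exists [:: false]; split; [right|exists 0%N, (size w); rewrite rot0 wpow_seq1].
move=> w; split; last by move=> hw; exists V0.
case=> V [[H1 H2] hV]; have [hm hl] := H1 w hV.
have [hw [ew|[hE ew]]] := (iffLR (maxP w)) hm.
  by left; rewrite ew; rewrite ew in hl; rewrite (lyndon_nseq _ _ hl).
by right; split => //; rewrite ew; rewrite ew in hl; rewrite (lyndon_nseq _ _ hl).
Qed.

Lemma main_sec (A B : 'M[R]_2) (ap am bp bm : option R) :
  \det A = 1 -> \det B = 1 ->
  A *m B != B *m A ->
  hyperbolic A -> hyperbolic B ->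
  attracting A ap -> repelling A am ->
  attracting B bp -> repelling B bm ->
  coherently_oriented A B ap am bp bm ->
  axes_intersect ap am bp bm ->
  wtr A B [:: false] <= wtr A B [:: true] ->
  forall w : word,
    optimal A B w <->
    (w = [:: true] \/ (wtr A B [:: false] = wtr A B [:: true] /\ w = [:: false])).
Proof.
move=> dA dB ncom hA hB aA rA aB rB _ [z [gA gB]] hle.
have fix1 : forall M p, (exists (v : 'cV[R]_2) (l : R), [/\ v != 0, M *m v = l *: v, 1 < `|l| & p = point_of v]) -> fixp M p.
  by move=> M p [v [l [h1 h2 _ ->]]]; exact: fixp_eig _ _ _ h1 h2.
have fix2 : forall M p, (exists (v : 'cV[R]_2) (l : R), [/\ v != 0, M *m v = l *: v, `|l| < 1 & p = point_of v]) -> fixp M p.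
  by move=> M p [v [l [h1 h2 _ ->]]]; exact: fixp_eig _ _ _ h1 h2.
have LA := geo_sym _ _ _ _ (fix1 _ _ aA) (fix2 _ _ rA) gA.
have LB := geo_sym _ _ _ _ (fix1 _ _ aB) (fix2 _ _ rB) gB.
have hy : 0 < z.2 by case: gA.
set x := z.1 in LA LB; set y := z.2 in hy LA LB.
set P := mk2 y x 0 1; set Q := mk2 (1 / y) (- x / y) 0 1.
have hQP : Q *m P = 1%:M := QP1 x y hy.
have hPQ : P *m Q = 1%:M := PQ1 x y hy.
set A' := Q *m A *m P; set B' := Q *m B *m P.
have sA : A' 0 1 = A' 1 0 := conj_sym _ _ _ hy LA.
have sB : B' 0 1 = B' 1 0 := conj_sym _ _ _ hy LB.
have dA' : \det A' = 1 by rewrite conj_det.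
have dB' : \det B' = 1 by rewrite conj_det.
have tA : \tr A' = \tr A := conj_tr _ _ _ hPQ.
have tB : \tr B' = \tr B := conj_tr _ _ _ hPQ.
have wE : forall u, wtr A' B' u = wtr A B u.
  by move=> u; rewrite /wtr conj_phi // conj_tr.
have w1 : wtr A B [:: false] = \tr A by rewrite /wtr /= mulmx1.
have w2 : wtr A B [:: true] = \tr B by rewrite /wtr /= mulmx1.
have ncom' : A' *m B' != B' *m A'.
  apply: contraNneq ncom => E; apply/eqP; apply: (conj_inj _ _ _ _ hPQ).
  have e : forall X Y, (Q *m X *m P) *m (Q *m Y *m P) = Q *m (X *m Y) *m P.
    by move=> X Y; rewrite -!mulmxA (mulmxA P Q) hPQ mul1mx.
  by rewrite -!e.
have htA : 2 < \tr A' by rewrite tA.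
have hAB : \tr A' <= \tr B' by rewrite tA tB -w1 -w2.
have C := core _ _ sA sB dA' dB' htA hAB ncom'.
apply: final_logic.
- by move=> u hu; rewrite -!wE; case: (C u hu).
- move=> u hu; rewrite -!wE => heq; case: (C u hu) => _ /(_ heq) [->|[e ->]].
    by left; rewrite size_nseq.
  by right; split; rewrite ?size_nseq // !wE w1 w2 -tA -tB.
- move=> hE n.
  have htB : 2 < \tr B by move: hB; rewrite /hyperbolic.
  have [hl hh] := lam_facts _ htB.
  set mu := lam (\tr B) in hl hh.
  have hmn : mu * (\tr B - mu) = 1 by lra.
  rewrite (tr_pow A B true _ _ dB _ hmn); last by ring.
  by rewrite (tr_pow A B false _ _ dA _ hmn) // -w1 hE w2; ring.
Qed.

End Mat.

Theorem theorem3p4 (R : realType) (A B : 'M[R]_2) (ap am bp bm : option R) :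
  \det A = 1 -> \det B = 1 ->
  A *m B != B *m A ->
  hyperbolic A -> hyperbolic B ->
  attracting A ap -> repelling A am ->
  attracting B bp -> repelling B bm ->
  coherently_oriented A B ap am bp bm ->
  axes_intersect ap am bp bm ->
  wtr A B [:: false] <= wtr A B [:: true] ->
  forall w : word,
    optimal A B w <->
    (w = [:: true] \/ (wtr A B [:: false] = wtr A B [:: true] /\ w = [:: false])).
Proof. exact: main_sec. Qed.
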